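(* Let $n$ and $x$ be positive integers with $x\le n$, let $k\ge 0$, and let $\mathcal M=\{M_1,\dots,M_s\}$ be a collection of perfect matchings of $K_{2n}$ such that each of the $\binom{2n}{2}$ edges of $K_{2n}$ belongs to at most $k$ of the matchings $M_1,\dots,M_s$. Let $$N=\sum_{j=\max(0,\,2x-n)}^{x}\binom{2x}{2j}\frac{(2j)!}{j!\,2^j}.$$ If $$k\le\frac{1}{e\cdot 2x(2n-1)\binom{n-1}{x-1}}\bigl(N-e\bigr),$$ then there exists a perfect matching $M$ of $K_{2n}$ such that $|M\cap M_i|\le x-1$ for every $i\in\{1,\dots,s\}$.
   Context: A perfect matching of $K_{2n}$ is a set of $n$ pairwise vertex-disjoint edges covering all $2n$ vertices; $e$ denotes Euler's number. The quantity $N$ counts the ways to choose a set of $j$ pairwise disjoint pairs from a fixed set of $2x$ vertices (leaving $2x-2j$ unpaired vertices), summed over those $j$ with $j+(2x-2j)\le n$. *)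

(* Defs.v *)
From Stdlib Require Import Reals.
From mathcomp Require Import all_boot.
Set Implicit Arguments. Unset Strict Implicit. Unset Printing Implicit Defensive.

Definition is_edge (n : nat) (e : {set 'I_(2 * n)}) : bool := #|e| == 2.

Definition perfect_matching (n : nat) (M : {set {set 'I_(2 * n)}}) : bool :=
  partition M [set: 'I_(2 * n)] && [forall e in M, is_edge e].

(* (2j)! / (j! 2^j) : number of perfect matchings on 2j points (exact division). *)
Definition pm_count (j : nat) : nat := (2 * j)`! %/ (j`! * 2 ^ j).

Definition Nval (n x : nat) : nat :=
  \sum_(maxn 0 (2 * x - n) <= j < x.+1) 'C(2 * x, 2 * j) * pm_count j.

(* Main.v *)
Require Import Defs.
From Stdlib Require Import Reals Lra.
From mathcomp Require Import all_boot zify ring.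
Set Implicit Arguments. Unset Strict Implicit. Unset Printing Implicit Defensive.


Definition odf (m : nat) : nat := \prod_(i < m) (2 * i + 1).

Lemma odf_gt0 m : 0 < odf m.
Proof. rewrite /odf; elim/big_ind: _ => // [a b Ha Hb|i _]; [by rewrite muln_gt0 Ha Hb | by rewrite addn1]. Qed.

Lemma odfS m : odf m.+1 = odf m * (2 * m + 1).
Proof. by rewrite /odf big_ord_recr. Qed.

Lemma fact_double j : (2 * j)`! = odf j * (j`! * 2 ^ j).
Proof.
elim: j => [|j IH]; first by rewrite /odf big_ord0.
have -> : 2 * j.+1 = (2 * j).+2 by rewrite mulnS.
rewrite !factS IH odfS expnS; lia.
Qed.

Lemma pm_countE j : pm_count j = odf j.
Proof.
by rewrite /pm_count fact_double mulnK // muln_gt0 fact_gt0 expn_gt0.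
Qed.

Lemma bin_le_exp x k : 'C(x, k) <= x ^ k.
Proof.
apply: (@leq_trans (x ^_ k)).
  by rewrite -bin_ffact leq_pmulr // fact_gt0.
rewrite ffact_prod; apply: (@leq_trans (\prod_(i < k) x)).
  by apply: leq_prod => i _; apply: leq_subr.
by rewrite prod_nat_const card_ord.
Qed.

Lemma odf_split a b : odf (a + b) = odf a * \prod_(i < b) (2 * (a + i) + 1).
Proof. by rewrite /odf big_split_ord. Qed.

Lemma prod_ge_const b c (F : nat -> nat) : (forall i, c <= F i) ->
  c ^ b <= \prod_(i < b) F i.
Proof.
move=> H; elim: b => [|b IH]; first by rewrite big_ord0.
by rewrite big_ord_recr expnSr leq_mul.
Qed.

Lemma key_ineq x a : 0 < x -> a <= x ->
  'C(x, a) * odf x * (x + 1) <= 4 * x ^ 2 * odf (x + a).-1.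
Proof.
case: x => // x' _ ha.
case: a ha => [|b] hb.
  rewrite bin0 addn0 /= odfS.
  have := odf_gt0 x'; nia.
have -> : (x'.+1 + b.+1).-1 = x'.+1 + b by rewrite addnS.
rewrite odf_split.
have HH : forall i, 2 * x'.+1 <= 2 * (x'.+1 + i) + 1 by move=> i; lia.
have H1 := prod_ge_const b HH.
have H2 := bin_le_exp x'.+1 b.+1.
set P := \prod_(i < _) _ in H1 *.
set o := odf x'.+1.
set X := x'.+1 in H1 H2 *.
have HX : 0 < X by [].
apply: (@leq_trans (X ^ b.+1 * o * (X + 1))).
  by rewrite leq_mul2r leq_mul2r H2 orbT.
apply: (@leq_trans (4 * X ^ 2 * (o * (2 * X) ^ b))); last first.
  by rewrite leq_mul2l leq_mul2l H1 !orbT.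
rewrite expnMn expnS.
have : X ^ b <= 2 ^ b * X ^ b by rewrite leq_pmull // expn_gt0.
set u := X ^ b; set v := 2 ^ b => h.
have : 0 < u by rewrite expn_gt0 HX.
nia.
Qed.


Lemma term_id x j : j <= x ->
  'C(2 * x, 2 * j) * odf j * odf (x - j) = odf x * 'C(x, j).
Proof.
move=> hj.
have h2 : 2 * j <= 2 * x by rewrite leq_mul2l hj orbT.
have e1' := bin_fact h2.
have e2 := bin_fact hj.
have ex : 2 ^ x = 2 ^ j * 2 ^ (x - j) by rewrite -expnD subnKC.
have e3 : 2 * x - 2 * j = 2 * (x - j) by rewrite mulnBr.
rewrite e3 !fact_double in e1'.
rewrite -e2 ex in e1'.
apply/eqP; rewrite -(@eqn_pmul2r (j`! * (x - j)`! * (2 ^ j * 2 ^ (x - j)))); last first.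
  by rewrite !muln_gt0 !fact_gt0 !expn_gt0.
apply/eqP; rewrite -[LHS]/(_ : nat).
move: e1'; set A := 'C(2 * x, 2 * j); set B := odf j; set C := odf (x - j).
set D := odf x; set E := 'C(x, j); set f1 := j`!; set f2 := (x - j)`!.
set p1 := 2 ^ j; set p2 := 2 ^ (x - j) => e.
nia.
Qed.

Definition Pn (n x : nat) := \prod_(i < x) (2 * (n - x + i) + 1).

Lemma term_bound n x j : 0 < x -> j <= x -> x + (x - j) <= n ->
  n * ('C(2 * x, 2 * j) * pm_count j) * (x + 1) <= 4 * x ^ 2 * Pn n x.
Proof.
case: x => // x' _ hj hn.
rewrite pm_countE.
have key := key_ineq (ltn0Sn x') (leq_subr j x'.+1).
rewrite bin_sub // in key.
set a := x'.+1 - j in key hn.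
have ea : (x'.+1 + a).-1 = a + x' by rewrite addSn addnC.
rewrite ea in key.
rewrite odf_split in key.
set Q' := \prod_(i < x') _ in key.
have Hterm := term_id hj; rewrite -/a in Hterm.
have H1 : 'C(2 * x'.+1, 2 * j) * odf j * (x'.+1 + 1) <= 4 * x'.+1 ^ 2 * Q'.
  rewrite -(@leq_pmul2r (odf a)) ?odf_gt0 //.
  move: key Hterm; set A := 'C(2 * x'.+1, 2 * j) * odf j.
  set E := 'C(x'.+1, j); set D := odf x'.+1; set o := odf a => k h.
  nia.
rewrite /Pn big_ord_recr /=.
set Qn := \prod_(i < x') _.
have HQ : Q' <= Qn.
  apply: leq_prod => i _; rewrite leq_add2r leq_mul2l; apply/orP; right.
  lia.
have -> : 2 * (n - x'.+1 + x') + 1 = (2 * n).-1 by lia.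
have hn1 : n <= (2 * n).-1 by lia.
have H2 := leq_mul hn1 H1.
have H3 : 4 * x'.+1 ^ 2 * Q' <= 4 * x'.+1 ^ 2 * Qn by rewrite leq_mul2l HQ orbT.
have H4 := leq_mul (leqnn (2 * n).-1) H3.
move: H2 H4; set T := 'C(2 * x'.+1, 2 * j) * odf j; set Z := 4 * x'.+1 ^ 2.
move=> H2 H4.
apply: (leq_trans _ (leq_trans H2 _)); first by rewrite mulnA.
apply: (leq_trans H4); apply: eq_leq; ring.
Qed.

Lemma N_bound n x : 0 < x -> n * Nval n x <= 4 * x ^ 2 * Pn n x.
Proof.
move=> hx.
rewrite -(@leq_pmul2r (x + 1)) ?addn1 //.
rewrite /Nval big_distrr big_distrl /=.
apply: (@leq_trans (\sum_(maxn 0 (2 * x - n) <= j < x.+1) 4 * x ^ 2 * Pn n x)).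
  rewrite big_nat_cond [X in _ <= X]big_nat_cond.
  apply: leq_sum => j /andP[/andP[h1 h2] _].
  have := @term_bound n x j hx; rewrite addn1; apply => //; lia.
rewrite sum_nat_const_nat mulnC leq_mul2l; apply/orP; right.
by rewrite leq_subr.
Qed.


Section PM.
Variable T : finType.

Definition pmo (V : {set T}) : {set {set {set T}}} :=
  [set M : {set {set T}} | partition M V & [forall e in M, #|e| == 2]].

Lemma pmoP V M : reflect [/\ cover M = V, trivIset M, set0 \notin M &
   forall e, e \in M -> #|e| = 2] (M \in pmo V).
Proof.
rewrite inE /partition; apply: (iffP idP).
  case/andP=> /and3P[/eqP ? ? ?] /forallP H; split=> // e eM.
  by have /implyP/(_ eM)/eqP := H e.
case=> c t s H; rewrite c eqxx t s /=; apply/forallP=> e; apply/implyP=> eM.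
by rewrite H.
Qed.

Lemma card_bigcup_le (I : finType) (A : {pred I}) (F : I -> {set {set {set T}}}) :
  #|\bigcup_(i in A) F i| <= \sum_(i in A) #|F i|.
Proof.
elim/big_ind2: _ => [|a b c d h1 h2|i _]; first by rewrite cards0.
  by apply: leq_trans (leq_card_setU _ _) _; apply: leq_add.
by [].
Qed.

Lemma pm_disj F W V M' : F \in pmo W -> M' \in pmo (V :\: W) ->
  [disjoint F & M'].
Proof.
case/pmoP=> cF _ _ eF /pmoP[cM _ _ eM]; apply/pred0P=> B /=.
apply/negbTE/negP=> /andP[BF BM].
have: #|B| = 2 by exact: eF.
have BW : B \subset W by rewrite -cF; apply: bigcup_sup.
have BVW : B \subset V :\: W by rewrite -cM; apply: bigcup_sup.
case: (set_0Vmem B) => [->|[y yB]]; first by rewrite cards0.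
move=> _; move: (subsetP BW y yB) (subsetP BVW y yB); rewrite inE => ->.
by [].
Qed.

Lemma pm_fix (F : {set {set T}}) (W V : {set T}) : F \in pmo W -> W \subset V ->
  #|[set M in pmo V | F \subset M]| = #|pmo (V :\: W)|.
Proof.
move=> FW WV.
have EQ : [set M in pmo V | F \subset M] = (fun M' => F :|: M') @: pmo (V :\: W).
  apply/setP=> M; rewrite inE; apply/andP/imsetP.
  - case=> /pmoP[cM tM sM eM] FM; exists (M :\: F); last first.
      by apply/setP=> B; rewrite !inE; case: (boolP (B \in F)) => // /(subsetP FM).
    case/pmoP: FW => cF tF sF eF.
    apply/pmoP; split.
    + apply/setP=> y; rewrite !inE; apply/bigcupP/andP.
      * case=> B /setDP[BM BnF] yB; split; last first.
          by rewrite -cM; apply/bigcupP; exists B.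
        apply/negP; rewrite -cF => /bigcupP[B' B'F yB'].
        have B'M := subsetP FM _ B'F.
        case: (eqVneq B B') => [eBB'|nBB']; first by rewrite eBB' B'F in BnF.
        have := (trivIsetP tM) _ _ BM B'M nBB'.
        by move/pred0P/(_ y); rewrite /= yB yB'.
      * case=> ynW; rewrite -cM => /bigcupP[B BM yB]; exists B => //.
        rewrite inE BM andbT; apply/negP=> BF; move/negP: ynW; apply.
        by rewrite -cF; apply/bigcupP; exists B.
    + exact: trivIsetD.
    + by rewrite inE negb_and sM orbT.
    + by move=> e /setDP[eM' _]; apply: eM.
  - case=> M' M'P ->; split; last exact: subsetUl.
    case/pmoP: FW => cF tF sF eF; case/pmoP: (M'P) => cM tM sM eM.
    apply/pmoP; split.
    + rewrite /cover bigcup_setU -/(cover F) -/(cover M') cF cM.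
      by apply/setP=> y; rewrite !inE; case: (boolP (y \in W)) => // /(subsetP WV) ->.
    + apply: trivIsetU => //; rewrite cF cM.
      by rewrite disjoint_sym disjoints_subset setDE subsetIr.
    + by rewrite inE negb_or sF sM.
    + by move=> e /setUP[]; [apply: eF | apply: eM].
rewrite EQ card_in_imset // => M1 M2 P1 P2 /= E.
have D1 := pm_disj FW P1; have D2 := pm_disj FW P2.
apply/setP=> B; move/setP/(_ B): E; rewrite !inE.
case: (boolP (B \in F)) => BF /=; last by [].
move/pred0P/(_ B): D1; move/pred0P/(_ B): D2; rewrite /= BF /= => -> -> //.
Qed.


Lemma pmo_set0 : pmo set0 = [set set0].
Proof.
apply/setP=> M; rewrite !inE /partition; apply/andP/eqP.
  case=> H _; suff: partition M set0 by rewrite partition_set0 => /eqP.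
  exact: H.
move=> ->; split; last by apply/forallP=> e; rewrite inE.
have := partition_set0 (set0 : {set {set T}}); rewrite eqxx; by [].

Qed.

Lemma pm_card m (V : {set T}) : #|V| = (2 * m)%N -> #|pmo V| = odf m.
Proof.
elim: m V => [|m IH] V hV.
  move/eqP: hV; rewrite muln0 cards_eq0 => /eqP ->.
  by rewrite pmo_set0 cards1 /odf big_ord0.
have : 0 < #|V| by rewrite hV muln_gt0.
case/card_gt0P=> v vV.
have cnt : forall M, M \in pmo V ->
    #|[set w in V :\ v | [set v; w] \in M]| = 1.
  move=> M /pmoP[cM tM sM eM].
  have vc : v \in cover M by rewrite cM.
  have pbM := pblock_mem vc.
  have pv : v \in pblock M v by rewrite mem_pblock.
  have E : [set w in V :\ v | [set v; w] \in M] = pblock M v :\ v.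
    apply/setP=> w; rewrite !inE; apply/andP/andP.
    - case=> /andP[wv wV] vwM; split => //.
      have -> : pblock M v = [set v; w] by apply: def_pblock => //; rewrite !inE eqxx.
      by rewrite !inE eqxx orbT.
    - case=> wv wp; split.
        rewrite wv /= -cM; apply/bigcupP; by exists (pblock M v).
      suff -> : [set v; w] = pblock M v by [].
      apply/eqP; rewrite eqEcard cards2 eq_sym wv eM //= leqnn andbT.
      by apply/subsetP=> y; rewrite !inE => /orP[]/eqP->.
  have := cardsD1 v (pblock M v); rewrite pv eM // E.
  by case.
transitivity (\sum_(M in pmo V) #|[set w in V :\ v | [set v; w] \in M]|).
  by rewrite -sum1_card; apply: eq_bigr => M MP; rewrite cnt.
under eq_bigr do rewrite -sum1_card big_mkcond.
rewrite exchange_big /=.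
transitivity (\sum_(w in V :\ v) odf m).
  rewrite [RHS]big_mkcond; apply: eq_bigr => w _.
  case: (boolP (w \in V :\ v)) => wV.
  - rewrite -big_mkcondr.
    have : #|[set M in pmo V | [set [set v; w]] \subset M]| = odf m.
      have wv : w != v by move: wV; rewrite !inE => /andP[].
      rewrite (@pm_fix _ [set v; w]); first apply: IH.
      + rewrite cardsD hV; have -> : V :&: [set v; w] = [set v; w].
          apply/setIidPr/subsetP=> y; rewrite !inE => /orP[]/eqP->//.
          by move: wV; rewrite !inE => /andP[].
        by rewrite cards2 eq_sym wv mulnS addSn add1n subSS subn1.
      + apply/pmoP; split.
        * exact: cover1.
        * exact: trivIset1.
        * by rewrite inE eq_sym; apply/set0Pn; exists v; rewrite !inE eqxx.
        * by move=> e; rewrite inE => /eqP->; rewrite cards2 eq_sym wv.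
      + apply/subsetP=> y; rewrite !inE => /orP[]/eqP->//.
        by move: wV; rewrite !inE => /andP[].
    move=> <-; rewrite -sum1_card; apply: eq_bigl => M.
    by move: wV; rewrite !inE sub1set => /andP[-> ->].
  - by apply: big1 => M _; rewrite inE (negbTE wV).
rewrite sum_nat_const.
have -> : #|V :\ v| = (2 * m).+1.
  by move: (cardsD1 v V); rewrite vV hV mulnS add1n addSn => -[].
by rewrite /odf big_ord_recr /= mulnC addn1.
Qed.
End PM.


Section RP.
Local Open Scope R_scope.
Lemma real_part (k D N : nat) : (0 < D)%N ->
  Rle (INR k) (Rmult (Rinv (Rmult (exp 1) (INR D))) (Rminus (INR N) (exp 1))) ->
  (2 * k * D < N)%N.
Proof.
move=> hD hb.
have he : (2 < exp 1) by have := exp_ineq1 1 ltac:(lra); lra.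
have hD' : (0 < INR D) by apply: lt_0_INR; apply/ltP.
have hpos : (0 < exp 1 * INR D) by nra.
have h1 : (INR k * (exp 1 * INR D) <= INR N - exp 1).
  have := Rmult_le_compat_r _ _ _ (Rlt_le _ _ hpos) hb.
  have -> : (/ (exp 1 * INR D) * (INR N - exp 1) * (exp 1 * INR D) = INR N - exp 1).
    rewrite Rmult_assoc (Rmult_comm _ (exp 1 * INR D)) -Rmult_assoc Rinv_l ?Rmult_1_l //; lra.
  by [].
have hk : (0 <= INR k) by apply: pos_INR.
apply/ltP; apply: INR_lt.
rewrite -!multE !mult_INR.
have -> : INR 2 = 2 by [].
have hkD : 0 <= INR k * INR D by apply: Rmult_le_pos; lra.
have : 2 * (INR k * INR D) <= exp 1 * (INR k * INR D) by apply: Rmult_le_compat_r; lra.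
nra.
Qed.
End RP.

Lemma sum_mem (T : finType) (A B : {set T}) :
  \sum_(e in A) ((e \in B) : nat) = #|A :&: B|.
Proof.
rewrite -sum1_card.
rewrite [RHS](eq_bigl (fun e => (e \in A) && (e \in B))); last by move=> e; rewrite inE.
rewrite big_mkcondr /=; apply: eq_bigr => e _; by case: (e \in B).
Qed.

Theorem theorem3 (n x k s : nat) (Ms : 'I_s -> {set {set 'I_(2 * n)}})
  (hx0 : 0 < x) (hxn : x <= n)
  (hMs : forall i, perfect_matching (Ms i))
  (hk : forall e : {set 'I_(2 * n)}, is_edge e -> #|[set i | e \in Ms i]| <= k)
  (hbound : Rle (INR k)
      (Rmult (Rinv (Rmult (exp 1) (INR (2 * x * (2 * n - 1) * 'C(n - 1, x - 1)))))
             (Rminus (INR (Nval n x)) (exp 1)))) :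
  exists M : {set {set 'I_(2 * n)}},
    perfect_matching M /\ forall i : 'I_s, #|M :&: Ms i| <= x - 1.
Proof.
have hn : 0 < n by apply: leq_trans hxn.
set E := pmo [set: 'I_(2 * n)].
have PM : forall M, perfect_matching M = (M \in E) by move=> M; rewrite inE.
have hcardE : #|E| = odf n by apply: pm_card; rewrite cardsT card_ord.
have hMsP : forall i, Ms i \in E by move=> i; rewrite -PM.
have hMsn : forall i, #|Ms i| = n.
  move=> i; case/pmoP: (hMsP i) => cM tM sM eM.
  have := card_partition (_ : partition (Ms i) [set: 'I_(2 * n)]).
  rewrite (eq_bigr (fun _ => 2)); last by move=> e /eM.
  rewrite sum_nat_const cardsT card_ord => H.
  have := H; rewrite /partition cM tM sM eqxx => /(_ is_true_true); lia.
have hs : s <= k * (2 * n - 1).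
  set Ed := [set e : {set 'I_(2 * n)} | #|e| == 2].
  have hEd : #|Ed| = n * (2 * n - 1).
    rewrite card_draws card_ord bin2.
    have -> : (2 * n).-1 = 2 * n - 1 by lia.
    by rewrite -mulnA mul2n doubleK.
  have e1 : \sum_(i < s) #|Ms i| = s * n.
    by rewrite (eq_bigr (fun _ => n)) ?sum_nat_const ?card_ord // => i _; rewrite hMsn.
  have e2 : \sum_(i < s) #|Ms i| = \sum_(e in Ed) #|[set i | e \in Ms i]|.
    transitivity (\sum_(i < s) \sum_(e in Ed) ((e \in Ms i) : nat)).
      apply: eq_bigr => i _; rewrite sum_mem.
      have -> : Ed :&: Ms i = Ms i.
        apply/setIidPr/subsetP=> e eM; rewrite inE.
        by case/pmoP: (hMsP i) => _ _ _ /(_ e eM) ->.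
      by [].
    rewrite exchange_big /=; apply: eq_bigr => e _.
    rewrite -sum1_card [RHS]big_mkcond /=; apply: eq_bigr => i _; by rewrite inE; case: (e \in Ms i).
  have e3 : \sum_(e in Ed) #|[set i | e \in Ms i]| <= \sum_(e in Ed) k.
    apply: leq_sum => e; rewrite inE => he; exact: hk.
  rewrite sum_nat_const hEd -e2 e1 in e3.
  move: e3; have -> : n * (2 * n - 1) * k = (k * (2 * n - 1)) * n by ring.
  by rewrite leq_pmul2r.
have hD : 0 < 2 * x * (2 * n - 1) * 'C(n - 1, x - 1).
  rewrite !muln_gt0 hx0 bin_gt0 /=; lia.
have hr := real_part hD hbound.
have hN := N_bound n hx0.
have hP : k * (2 * n - 1) * 'C(n, x) < Pn n x.
  have hd := mul_bin_diag n (x - 1).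
  have ex1 : (x - 1).+1 = x by lia.
  rewrite ex1 -subn1 in hd.
  have : n * (2 * k * (2 * x * (2 * n - 1) * 'C(n - 1, x - 1))) < n * Nval n x.
    by rewrite ltn_pmul2l.
  move=> h; have := leq_trans h hN.
  have -> : n * (2 * k * (2 * x * (2 * n - 1) * 'C(n - 1, x - 1)))
          = 4 * x ^ 2 * (k * (2 * n - 1) * 'C(n, x)).
    move: hd; set c1 := 'C(n - 1, x - 1); set c2 := 'C(n, x) => hd.
    have -> : n * (2 * k * (2 * x * (2 * n - 1) * c1)) = 4 * x * k * (2 * n - 1) * (n * c1) by ring.
    rewrite hd; ring.
  by rewrite ltn_pmul2l // muln_gt0 expn_gt0 hx0.
have hodf : odf n = odf (n - x) * Pn n x.
  by rewrite /Pn -odf_split subnK.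
have hfin : s * 'C(n, x) * odf (n - x) < odf n.
  rewrite hodf mulnC ltn_pmul2l ?odf_gt0 //.
  by apply: leq_ltn_trans hP; rewrite leq_mul2r hs orbT.
set Bad := fun i => [set M in E | x <= #|M :&: Ms i|].
have hBad : forall i, #|Bad i| <= 'C(n, x) * odf (n - x).
  move=> i.
  set Fs := [set F : {set {set 'I_(2 * n)}} | F \subset Ms i & #|F| == x].
  have sub : Bad i \subset \bigcup_(F in Fs) [set M in E | F \subset M].
    apply/subsetP=> M; rewrite inE => /andP[ME hM].
    apply/bigcupP.
    exists [set y in take x (enum (M :&: Ms i))].
      rewrite inE; apply/andP; split.
        apply/subsetP=> y; rewrite inE => /mem_take; rewrite mem_enum inE.
        by case/andP.
      rewrite cardsE; apply/eqP; move/card_uniqP: (take_uniq x (enum_uniq (mem (M :&: Ms i)))) ->.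
      by rewrite size_takel // -cardE.
    rewrite inE ME /=; apply/subsetP=> y; rewrite inE => /mem_take; rewrite mem_enum inE.
    by case/andP.
  apply: leq_trans (subset_leq_card sub) _.
  apply: leq_trans (card_bigcup_le _ _) _.
  rewrite (eq_bigr (fun _ => odf (n - x))).
    by rewrite sum_nat_const cards_draws hMsn.
  move=> F; rewrite inE => /andP[FM /eqP Fx].
  case/pmoP: (hMsP i) => cM tM sM eM.
  have FP : F \in pmo (cover F).
    apply/pmoP; split => //.
    - exact: trivIsetS FM tM.
    - by apply/negP=> /(subsetP FM); apply/negP.
    - by move=> e /(subsetP FM) /eM.
  rewrite (pm_fix FP (subsetT _)); apply: pm_card.
  have hc : #|cover F| = 2 * x.
    rewrite (card_partition (_ : partition F (cover F))).
      rewrite (eq_bigr (fun _ => 2)); last by move=> e /(subsetP FM) /eM.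
      by rewrite sum_nat_const Fx mulnC.
    by move: FP; rewrite inE => /andP[].
  have := cardsC (cover F); rewrite setTD hc card_ord; lia.
have hU : #|\bigcup_(i in [set: 'I_s]) Bad i| < #|E|.
  apply: leq_ltn_trans (card_bigcup_le _ _) _.
  apply: leq_ltn_trans (_ : _ <= \sum_(i in [set: 'I_s]) ('C(n, x) * odf (n - x))) _.
    by apply: leq_sum => i _; apply: hBad.
  by rewrite sum_nat_const cardsT card_ord hcardE mulnA.
have : ~~ (E \subset \bigcup_(i in [set: 'I_s]) Bad i).
  by apply/negP=> /subset_leq_card; rewrite leqNgt hU.
case/subsetPn=> M ME MnB.
exists M; split; first by rewrite PM.
move=> i; have : M \notin Bad i.
  apply/negP=> MB; move/negP: MnB; apply; apply/bigcupP; exists i => //.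
rewrite inE ME /= -ltnNge; lia.
Qed.
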